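(* Let $A$ be a non-empty set, $I$ a non-empty index set, $\{V_i\}_{i\in I}\subseteq\mathcal R(A)$, $E$ a fuzzy equivalence on $A$, and $(A/E,I,V_i^{A/E})$ the quotient fuzzy relational system of $(A,I,V_i)$ with respect to $E$. Then the fuzzy relation $E^\natural\in\mathcal R(A,A/E)$ defined by $E^\natural(a_1,E_{a_2})=E(a_1,a_2)$ for all $a_1,a_2\in A$ is a uniform fuzzy relation whose kernel is $E$. Moreover, $E^\natural$ is a solution both to $WL^{2\text{-}1}(A,A/E,I,V_i,V_i^{A/E})$ and to $WL^{2\text{-}2}(A,A/E,I,V_i,V_i^{A/E})$.
   Context: $\mathcal L=(L,\wedge,\vee,\otimes,\to,0,1)$ is a complete residuated lattice; $x\leftrightarrow y=(x\to y)\wedge(y\to x)$. For non-empty sets $X,Y$, $\mathcal R(X,Y)$ is the set of fuzzy relations $X\times Y\to L$, $\mathcal R(X)=\mathcal R(X,X)$, ordered pointwise; $R^{-1}(y,x)=R(x,y)$; $(R\circ S)(x,t)=\bigvee_{y}R(x,y)\otimes S(y,t)$. A fuzzy equivalence $E$ on $A$ is a fuzzy relation that is reflexive ($E(a,a)=1$), symmetric and transitive ($E(a,b)\otimes E(b,c)\le E(a,c)$). For $a\in A$, $E_a$ is the fuzzy subset $x\mapsto E(a,x)$, and $A/E=\{E_a:a\in A\}$. The quotient fuzzy relational system is $(A/E,I,V_i^{A/E})$ with $V_i^{A/E}(E_{a_1},E_{a_2})=(E\circ V_i\circ E)(a_1,a_2)$ (well defined). For $R\in\mathcal R(X,Y)$: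 kernel $E_X^R(x_1,x_2)=\bigwedge_{y}R(x_1,y)\leftrightarrow R(x_2,y)$, co-kernel $E_Y^R(y_1,y_2)=\bigwedge_xR(x,y_1)\leftrightarrow R(x,y_2)$. $R$ is a uniform fuzzy relation if for every $x$ there is $y$ with $R(x,y)=1$, for every $y$ there is $x$ with $R(x,y)=1$, and $R(x,y_1)\otimes R(x,y_2)\le E_Y^R(y_1,y_2)$ for all $x,y_1,y_2$. Heterogeneous systems (given non-empty sets $P,Q$, $\{V_i\}\subseteq\mathcal R(P)$, $\{W_i\}\subseteq\mathcal R(Q)$, unknown $U\in\mathcal R(P,Q)$, with the bound $U\le Z$ trivial since $Z$ is omitted, i.e. constant $1$): $WL^{2\text{-}1}(P,Q,I,V_i,W_i)$: $U^{-1}\circ V_i\le W_i\circ U^{-1}$ for all $i\in I$; $WL^{2\text{-}2}(P,Q,I,V_i,W_i)$: $V_i\circ U\le U\circ W_i$ for all $i\in I$. *)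

(* Defs.v *)
From Stdlib Require Import ClassicalEpsilon.

Record CRL := {
  car :> Type;
  le : car -> car -> Prop;
  le_refl : forall x, le x x;
  le_antisym : forall x y, le x y -> le y x -> x = y;
  le_trans : forall x y z, le x y -> le y z -> le x z;
  sup : (car -> Prop) -> car;
  sup_ub : forall (S : car -> Prop) x, S x -> le x (sup S);
  sup_least : forall (S : car -> Prop) y, (forall x, S x -> le x y) -> le (sup S) y;
  inf : (car -> Prop) -> car;
  inf_lb : forall (S : car -> Prop) x, S x -> le (inf S) x;
  inf_greatest : forall (S : car -> Prop) y, (forall x, S x -> le y x) -> le y (inf S);
  zero : car;
  one : car;
  zero_bot : forall x, le zero x;
  one_top : forall x, le x one;
  mul : car -> car -> car;
  res : car -> car -> car;
  mulA : forall x y z, mul x (mul y z) = mul (mul x y) z;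
  mulC : forall x y, mul x y = mul y x;
  mul1 : forall x, mul x one = x;
  adjoint : forall x y z, le (mul x y) z <-> le x (res y z)
}.

Arguments le {_} _ _.
Arguments sup {_} _.
Arguments inf {_} _.
Arguments zero {_}.
Arguments one {_}.
Arguments mul {_} _ _.
Arguments res {_} _ _.

Section Fuzzy.
Variable L : CRL.

Definition meet (x y : L) : L := inf (fun z => z = x \/ z = y).
Definition join (x y : L) : L := sup (fun z => z = x \/ z = y).
Definition biimp (x y : L) : L := meet (res x y) (res y x).

Definition bigsup {I : Type} (f : I -> L) : L := sup (fun z => exists i, z = f i).
Definition biginf {I : Type} (f : I -> L) : L := inf (fun z => exists i, z = f i).

Definition frel (X Y : Type) := X -> Y -> L.
Definition frel_le {X Y : Type} (R S : frel X Y) : Prop :=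
  forall x y, le (R x y) (S x y).
Definition finv {X Y : Type} (R : frel X Y) : frel Y X := fun y x => R x y.
Definition fcomp {X Y Z : Type} (R : frel X Y) (S : frel Y Z) : frel X Z :=
  fun x t => bigsup (fun y : Y => mul (R x y) (S y t)).

Definition fuzzy_equiv {A : Type} (E : frel A A) : Prop :=
  (forall a, E a a = one) /\
  (forall a b, E a b = E b a) /\
  (forall a b c, le (mul (E a b) (E b c)) (E a c)).

Definition kernel {X Y : Type} (R : frel X Y) : frel X X :=
  fun x1 x2 => biginf (fun y : Y => biimp (R x1 y) (R x2 y)).
Definition cokernel {X Y : Type} (R : frel X Y) : frel Y Y :=
  fun y1 y2 => biginf (fun x : X => biimp (R x y1) (R x y2)).

Definition uniform {X Y : Type} (R : frel X Y) : Prop :=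
  (forall x, exists y, R x y = one) /\
  (forall y, exists x, R x y = one) /\
  (forall x y1 y2, le (mul (R x y1) (R x y2)) (cokernel R y1 y2)).

(* Weakly linear systems WL^{2-1} and WL^{2-2} (no upper bound Z) *)
Definition WL21 {P Q I : Type} (V : I -> frel P P) (W : I -> frel Q Q)
  (U : frel P Q) : Prop :=
  forall i, frel_le (fcomp (finv U) (V i)) (fcomp (W i) (finv U)).
Definition WL22 {P Q I : Type} (V : I -> frel P P) (W : I -> frel Q Q)
  (U : frel P Q) : Prop :=
  forall i, frel_le (fcomp (V i) U) (fcomp U (W i)).

(* Quotient set A/E = { E_a | a in A }, E_a = fun x => E a x *)
Definition quot {A : Type} (E : frel A A) : Type :=
  { f : A -> L | exists a, f = E a }.
Definition cls {A : Type} (E : frel A A) (a : A) : quot E :=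
  exist _ (E a) (ex_intro _ a eq_refl).
Definition repr {A : Type} {E : frel A A} (c : quot E) : A :=
  proj1_sig (constructive_indefinite_description _ (proj2_sig c)).

Definition quot_rel {A : Type} (E : frel A A) (V : frel A A) : frel (quot E) (quot E) :=
  fun c1 c2 => fcomp (fcomp E V) E (repr c1) (repr c2).

Definition natural {A : Type} (E : frel A A) : frel A (quot E) :=
  fun a1 c => E a1 (repr c).

End Fuzzy.

Arguments meet {_} _ _.
Arguments join {_} _ _.
Arguments biimp {_} _ _.

(* Main.v *)
Require Import Defs.
From Stdlib Require Import ClassicalEpsilon.

Section H.
Variable L : CRL.

Lemma mul_mono_l (x y z : L) : le x y -> le (mul x z) (mul y z).
Proof.
  intro H. apply adjoint. eapply le_trans; [exact H|]. apply adjoint. apply le_refl.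
Qed.
Lemma mul_mono_r (x y z : L) : le x y -> le (mul z x) (mul z y).
Proof. intro H. rewrite (mulC _ z x), (mulC _ z y). now apply mul_mono_l. Qed.
Lemma rot (a b c : L) : mul (mul a b) c = mul (mul c a) b.
Proof. rewrite (mulC L _ c). apply mulA. Qed.
Lemma adj_back (x y z : L) : le (mul x y) z -> le x (res y z).
Proof. apply adjoint. Qed.
Lemma mul1l (x : L) : mul one x = x.
Proof. rewrite mulC. apply mul1. Qed.
Lemma bigsup_ub {I : Type} (f : I -> L) i : le (f i) (bigsup L f).
Proof. apply sup_ub. eauto. Qed.
Lemma bigsup_least {I : Type} (f : I -> L) y : (forall i, le (f i) y) -> le (bigsup L f) y.
Proof. intro H. apply sup_least. intros x [i ->]. apply H. Qed.
Lemma biginf_lb {I : Type} (f : I -> L) i : le (biginf L f) (f i).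
Proof. apply inf_lb. eauto. Qed.
Lemma biginf_greatest {I : Type} (f : I -> L) y : (forall i, le y (f i)) -> le y (biginf L f).
Proof. intro H. apply inf_greatest. intros x [i ->]. apply H. Qed.
Lemma meet_lb1 (x y : L) : le (meet x y) x.
Proof. apply inf_lb. auto. Qed.
Lemma meet_lb2 (x y : L) : le (meet x y) y.
Proof. apply inf_lb. auto. Qed.
Lemma meet_glb (x y z : L) : le z x -> le z y -> le z (meet x y).
Proof. intros. apply inf_greatest. intros w [->| ->]; auto. Qed.
Lemma res1 (z : L) : le (res one z) z.
Proof. rewrite <- (mul1 L (res one z)). apply adjoint. apply le_refl. Qed.

Lemma repr_spec {A : Type} (E : frel L A A) (c : quot L E) : E (repr L c) = proj1_sig c.
Proof.
  unfold repr. destruct (constructive_indefinite_description _ _) as [r Hr]. simpl. auto.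
Qed.
End H.

Theorem theorem6p1 (L : CRL) (A I : Type) (hA : inhabited A) (hI : inhabited I)
  (V : I -> frel L A A) (E : frel L A A) (hE : fuzzy_equiv L E) :
  uniform L (natural L E) /\
  (forall a1 a2, kernel L (natural L E) a1 a2 = E a1 a2) /\
  WL21 L V (fun i => quot_rel L E (V i)) (natural L E) /\
  WL22 L V (fun i => quot_rel L E (V i)) (natural L E).
Proof.
  destruct hE as [Er [Es Et]].
  assert (Hc : forall a, E (repr L (cls L E a)) = E a) by (intro a; apply repr_spec).
  assert (Hone : forall a, E a (repr L (cls L E a)) = one).
  { intro a. rewrite Es, Hc. apply Er. }
  assert (Hone' : forall a, E (repr L (cls L E a)) a = one).
  { intro a. rewrite Hc. apply Er. }
  assert (T3 : forall x y z w, le (mul (mul (E x y) (E y z)) (E z w)) (E x w)).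
  { intros. eapply le_trans; [apply mul_mono_l, Et|]. apply Et. }
  unfold natural. split; [|split; [|split]].
  - split; [|split].
    + intro x. exists (cls L E x). apply Hone.
    + intro c. exists (repr L c). apply Er.
    + intros x c1 c2. unfold cokernel. apply biginf_greatest. intro x'.
      unfold biimp. set (r1 := repr L c1). set (r2 := repr L c2).
      apply meet_glb; apply adj_back.
      * rewrite (rot L). rewrite (Es x r1). apply T3.
      * rewrite (mulC L (E x r1) (E x r2)), (rot L). rewrite (Es x r2). apply T3.
  - intros a1 a2. unfold kernel. apply le_antisym.
    + eapply le_trans; [apply (biginf_lb _ _ (cls L E a2))|]. cbv beta. unfold biimp.
      eapply le_trans; [apply meet_lb2|]. rewrite Hone.
      eapply le_trans; [apply res1|]. rewrite Es, Hc, Es. apply le_refl.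
    + apply biginf_greatest. intro c. unfold biimp. apply meet_glb; apply adj_back.
      * rewrite (Es a1 a2). apply Et.
      * apply Et.
  - intros i c a. unfold fcomp, finv. apply bigsup_least. intro y.
    eapply le_trans; [|apply (bigsup_ub _ _ (cls L E a))]. cbv beta.
    rewrite Hone, mul1. unfold quot_rel, fcomp.
    eapply le_trans; [|apply (bigsup_ub _ _ a)]. cbv beta. rewrite Hone, mul1.
    eapply le_trans; [|apply (bigsup_ub _ _ y)]. cbv beta. rewrite Es. apply le_refl.
  - intros i a c. unfold fcomp. apply bigsup_least. intro y.
    eapply le_trans; [|apply (bigsup_ub _ _ (cls L E a))]. cbv beta.
    rewrite Hone, mul1l. unfold quot_rel, fcomp.
    eapply le_trans; [|apply (bigsup_ub _ _ y)]. cbv beta. apply mul_mono_l.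
    eapply le_trans; [|apply (bigsup_ub _ _ a)]. cbv beta. rewrite Hone', mul1l. apply le_refl.
Qed.
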